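(* Let $k\ge2$, $p\in(0,1)$, $q=1-p$, and $R^{(k)}_n(p)=\mathbb{E}[Y(k,n,p)]$. Then $R^{(k)}_1(p)=1$, for $n\ge2$ $$R^{(k)}_n(p)=n-\frac1q\sum_{i=1}^{n-1}(n-i)\,s^{(k)}_i\,(p^{k-1}q)^i,$$ and $$\sum_{n\ge1}R^{(k)}_n(p)z^n=\frac{z}{(1-z)^2}\left(1-\frac1qS^{(k)}(p^{k-1}qz)\right).$$
   Context: Matchbox process: fix integers $k\ge 2$, $n\ge 1$ and $p\in(0,1)$, $q=1-p$. Initially $k$ boxes each contain $n$ matches. At each time step, independently, with probability $p$ a match is removed from a box currently containing the largest number of matches, and with probability $q$ from a box currently containing the smallest number (ties broken arbitrarily). A diagonal state is a state in which all $k$ boxes contain the same number of matches. Let $Y=Y(k,n,p)$ be the smallest $i\in\{1,\dots,n-1\}$ such that the process reaches the diagonal state in which every box contains $n-i$ matches (before any box is empty), with the convention $Y=n$ if no such $i$ exists. $s^{(k)}_i=\frac{k-1}{ki-1}\binom{ki-1}{i-1}$ and $S^{(k)}(z)=\sum_{i\ge1}s^{(k)}_iz^i$. *)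

(* Defs.v *)
From mathcomp Require Import all_boot all_order all_algebra.
From mathcomp Require Import all_classical all_reals all_analysis.
Set Implicit Arguments. Unset Strict Implicit. Unset Printing Implicit Defensive.
Import Order.TTheory GRing.Theory Num.Theory.
Local Open Scope ring_scope.

(* A state of the matchbox process: the list of the k box contents. *)
Definition maxbox (s : seq nat) : nat := \max_(x <- s) x.
Definition minbox (s : seq nat) : nat := \big[minn/head 0%N s]_(x <- s) x.

Definition remove_at (s : seq nat) (i : nat) : seq nat :=
  set_nth 0%N s i (nth 0%N s i).-1.

(* One step: b = true means "remove from a largest box" (probability p),
   b = false means "remove from a smallest box" (probability q = 1 - p). *)
Definition mstep (s : seq nat) (b : bool) : seq nat :=
  if b then remove_at s (index (maxbox s) s)
  else remove_at s (index (minbox s) s).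

Definition mstate (k n : nat) (bs : seq bool) (t : nat) : seq nat :=
  foldl mstep (nseq k n) (take t bs).

Definition reaches_diag (k n : nat) (bs : seq bool) (m : nat) : bool :=
  has (fun t => mstate k n bs t == nseq k m) (iota 0 (size bs).+1).

Definition Yval (k n : nat) (bs : seq bool) : nat :=
  head n [seq i <- iota 1 n.-1 | reaches_diag k n bs (n - i)].

Definition pweight {R : numDomainType} (p : R) (bs : seq bool) : R :=
  \prod_(b <- bs) (if b then p else 1 - p).

(* R^{(k)}_n(p) = E[Y(k,n,p)]: the first k*n steps determine Y. *)
Definition Rexp {R : numDomainType} (k n : nat) (p : R) : R :=
  \sum_(bs : (k * n).-tuple bool) pweight p bs * (Yval k n bs)%:R.

Definition scoef {R : numFieldType} (k i : nat) : R :=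
  (k.-1)%:R / (k * i).-1%:R * ('C((k * i).-1, i.-1))%:R.

(* Main.v *)
Require Import Defs.
From mathcomp Require Import all_boot all_order all_algebra.
From mathcomp Require Import all_classical all_reals all_analysis.
From mathcomp Require Import zify ring lra.
Import Order.TTheory GRing.Theory Num.Theory.
Import numFieldNormedType.Exports.
Set Implicit Arguments. Unset Strict Implicit. Unset Printing Implicit Defensive.

Module NatPart.
Lemma bigmin_le d s x : x \in s -> \big[minn/d]_(y <- s) y <= x.
Proof.
elim: s => [|a s IH] //=; rewrite inE big_cons => /orP[/eqP->|/IH h].
  exact: geq_minl.
by rewrite geq_min h orbT.
Qed.

Lemma bigmin_led d s : \big[minn/d]_(y <- s) y <= d.
Proof. elim: s => [|a s IH]; first by rewrite big_nil. by rewrite big_cons geq_min IH orbT. Qed.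

Lemma bigmin_mem d s : \big[minn/d]_(y <- s) y \in d :: s.
Proof.
elim: s => [|a s IH]; first by rewrite big_nil mem_head.
rewrite big_cons /minn; case: ltnP => _.
  by rewrite !inE eqxx orbT.
move: IH; rewrite !inE => /orP[->//|->]; by rewrite !orbT.
Qed.

Lemma minbox_le s x : x \in s -> minbox s <= x.
Proof. exact: bigmin_le. Qed.

Lemma minbox_mem s : s != [::] -> minbox s \in s.
Proof.
case: s => [//|a s] _; rewrite /minbox /=.
have := bigmin_mem a (a :: s); rewrite inE => /orP[/eqP->|//].
by rewrite inE eqxx.
Qed.

Lemma maxbox_ge s x : x \in s -> x <= maxbox s.
Proof.
rewrite /maxbox; elim: s => [|a s IH] //=; rewrite inE big_cons => /orP[/eqP->|/IH h].
  exact: leq_maxl.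
by rewrite leq_max h orbT.
Qed.

Lemma maxbox_mem s : s != [::] -> maxbox s \in s.
Proof.
rewrite /maxbox; elim: s => [//|a s IH] _; rewrite big_cons.
case: s IH => [|b s] IH; first by rewrite big_nil maxn0 inE eqxx.
have := IH isT; rewrite /maxn; case: ltnP => _ h; rewrite inE ?h ?orbT //.
by rewrite eqxx.
Qed.

Lemma minbox_eq s m : m \in s -> (forall x, x \in s -> m <= x) -> minbox s = m.
Proof.
move=> ms h; apply/eqP; rewrite eqn_leq minbox_le //= h //.
by apply: minbox_mem; apply/eqP => s0; rewrite s0 in ms.
Qed.

Lemma sumn_ge s m : (forall x, x \in s -> m <= x) -> size s * m <= sumn s.
Proof.
elim: s => [|a s IH] //= h; rewrite mulSn leq_add //.
  by apply: h; rewrite inE eqxx.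
by apply: IH => x xs; apply: h; rewrite inE xs orbT.
Qed.

Lemma sumn_eq_all s m : (forall x, x \in s -> m <= x) -> sumn s = size s * m ->
  forall x, x \in s -> x = m.
Proof.
elim: s => [|a s IH] //= h e x; rewrite inE.
have ha : m <= a by apply: h; rewrite inE eqxx.
have hs : size s * m <= sumn s by apply: sumn_ge => y ys; apply: h; rewrite inE ys orbT.
move: e; rewrite mulSn => e.
have [am e'] : a = m /\ sumn s = size s * m.
  by move: e ha hs; set X := size s * m; set Y := sumn s; lia.
case/orP=> [/eqP->|xs]; first exact: am.
apply: (IH _ _ _ xs); last exact: e'.
by move=> y ys; apply: h; rewrite inE ys orbT.
Qed.

Lemma all_eq_nseq (s : seq nat) (m : nat) : (forall x, x \in s -> x = m) -> s = nseq (size s) m.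
Proof.
elim: s => [|a s IH] //= h; congr (_ :: _); first exact: (h a (mem_head a s)).
by apply: IH => x xs; apply: h; rewrite inE xs orbT.
Qed.

Lemma sumn_set_nth s i y : i < size s ->
  sumn (set_nth 0 s i y) + nth 0 s i = sumn s + y.
Proof.
elim: s i => [|a s IH] [|i] //= hi.
  lia.
have := IH i hi; lia.
Qed.

Lemma size_remove_at s i : i < size s -> size (remove_at s i) = size s.
Proof. by move=> hi; rewrite /remove_at size_set_nth; apply/maxn_idPr. Qed.

Lemma nth_remove_at s i j : nth 0 (remove_at s i) j = if j == i then (nth 0 s i).-1 else nth 0 s j.
Proof. by rewrite /remove_at nth_set_nth /=. Qed.

Lemma min_remove_min (s : seq nat) : s != [::] -> 0 < minbox s ->
  minbox (remove_at s (index (minbox s) s)) = (minbox s).-1.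
Proof.
move=> sne m0; have ms := minbox_mem sne.
have hi : index (minbox s) s < size s by rewrite index_mem.
apply: minbox_eq.
  apply/(nthP 0); exists (index (minbox s) s); first by rewrite size_remove_at.
  by rewrite nth_remove_at eqxx nth_index.
move=> x /(nthP 0) [j hj <-]; rewrite nth_remove_at; case: ifP => _.
  by rewrite nth_index.
have hj' : j < size s by rewrite size_remove_at in hj.
exact: leq_trans (leq_pred _) (minbox_le (mem_nth 0 hj')).
Qed.

Lemma min_remove_big (s : seq nat) i : i < size s -> minbox s < nth 0 s i ->
  minbox (remove_at s i) = minbox s.
Proof.
move=> hi lt; have sne : s != [::] by case: s hi {lt}.
have ms := minbox_mem sne.
apply: minbox_eq.
  apply/(nthP 0); exists (index (minbox s) s); first by rewrite size_remove_at // index_mem.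
  rewrite nth_remove_at; case: eqP => [e|_]; last by rewrite nth_index.
  by move: lt; rewrite -e nth_index // ltnn.
move=> x /(nthP 0) [j hj <-]; rewrite nth_remove_at; case: ifP => _.
  by rewrite -ltnS prednK // (leq_ltn_trans _ lt).
have hj' : j < size s by rewrite size_remove_at in hj.
exact: minbox_le (mem_nth 0 hj').
Qed.

Definition wstep (k g : nat) (b : bool) : nat :=
  if g == 0 then k.-1 else if b then g.-1 else g + k.-1.

Lemma mstep_inv (s : seq nat) b g : 0 < size s -> 0 < minbox s ->
  sumn s = size s * minbox s + g ->
  [/\ size (mstep s b) = size s, sumn (mstep s b) + 1 = sumn s &
      sumn (mstep s b) = size s * minbox (mstep s b) + wstep (size s) g b].
Proof.
move=> s0 m0 e.
have sne : s != [::] by case: s s0 {e m0}.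
have ms := minbox_mem sne; have Ms := maxbox_mem sne.
have hsum : forall i, i < size s -> 0 < nth 0 s i ->
    size (remove_at s i) = size s /\ sumn (remove_at s i) + 1 = sumn s.
  move=> i hi hv; split; first exact: size_remove_at.
  have := sumn_set_nth (nth 0 s i).-1 hi; rewrite -/(remove_at s i); lia.
have hM : minbox s <= maxbox s by exact: minbox_le.
have hmul : size s * (minbox s).-1 + size s = size s * minbox s.
  by rewrite -mulnSr prednK.
have [g0|gpos] := eqVneq g 0.
  have alleq : forall x, x \in s -> x = minbox s.
    apply: sumn_eq_all; first exact: minbox_le.
    by rewrite e g0 addn0.
  have Mm : maxbox s = minbox s by apply: alleq.
  have hi : index (minbox s) s < size s by rewrite index_mem.
  have hv : 0 < nth 0 s (index (minbox s) s) by rewrite nth_index.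
  have [h1 h2] := hsum _ hi hv.
  have h3 := min_remove_min sne m0.
  rewrite /mstep /wstep g0 eqxx Mm; case: b; split => //;
  move: h2 h3 e hmul; rewrite g0; set X := size s * _; set Y := size s * _; lia.
case: b.
  have lt : minbox s < maxbox s.
    rewrite ltn_neqAle hM andbT; apply/negP => /eqP Mm.
    have alleq : forall x, x \in s -> x = minbox s.
      move=> x xs; apply/eqP; rewrite eqn_leq minbox_le // Mm maxbox_ge //.
    have := all_eq_nseq alleq; move=> hs.
    have : sumn s = size s * minbox s by rewrite {1}hs sumn_nseq mulnC.
    move: gpos; rewrite e; lia.
  have hi : index (maxbox s) s < size s by rewrite index_mem.
  have hv : 0 < nth 0 s (index (maxbox s) s) by rewrite nth_index // (leq_trans _ lt).
  have [h1 h2] := hsum _ hi hv.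
  have h3 : minbox (remove_at s (index (maxbox s) s)) = minbox s.
    by apply: min_remove_big; rewrite // nth_index.
  rewrite /mstep /wstep (negbTE gpos); split => //.
  move: h2 h3 e gpos; set X := size s * _; lia.
have hi : index (minbox s) s < size s by rewrite index_mem.
have hv : 0 < nth 0 s (index (minbox s) s) by rewrite nth_index.
have [h1 h2] := hsum _ hi hv.
have h3 := min_remove_min sne m0.
rewrite /mstep /wstep (negbTE gpos); split => //.
move: h2 h3 e hmul gpos; set X := size s * _; set Y := size s * _; lia.
Qed.

Lemma mstep_size (s : seq nat) b : s != [::] -> size (mstep s b) = size s.
Proof.
move=> sne; rewrite /mstep; case: b; apply: size_remove_at; rewrite index_mem.
  exact: maxbox_mem. exact: minbox_mem.
Qed.

Lemma mstep_min_le (s : seq nat) b : s != [::] -> minbox (mstep s b) <= minbox s.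
Proof.
move=> sne; have ms := minbox_mem sne.
have hj : index (minbox s) s < size s by rewrite index_mem.
have key : forall i, i < size s -> minbox (remove_at s i) <= minbox s.
  move=> i hi; apply: (@leq_trans (nth 0 (remove_at s i) (index (minbox s) s))).
    by apply: minbox_le; apply: mem_nth; rewrite size_remove_at.
  rewrite nth_remove_at; case: eqP => [<-|_]; rewrite nth_index //; exact: leq_pred.
rewrite /mstep; case: b; apply: key; rewrite index_mem //; exact: maxbox_mem.
Qed.

Definition W (k g : nat) (bs : seq bool) (t : nat) : nat := foldl (wstep k) g (take t bs).

Lemma mstateS k n bs t : t < size bs ->
  mstate k n bs t.+1 = mstep (mstate k n bs t) (nth true bs t).
Proof. by move=> ht; rewrite /mstate (take_nth true ht) foldl_rcons. Qed.

Lemma WS k g bs t : t < size bs -> W k g bs t.+1 = wstep k (W k g bs t) (nth true bs t).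
Proof. by move=> ht; rewrite /W (take_nth true ht) foldl_rcons. Qed.

Lemma mstate0 k n bs : mstate k n bs 0 = nseq k n.
Proof. by rewrite /mstate take0. Qed.

Lemma W0 k g bs : W k g bs 0 = g.
Proof. by rewrite /W take0. Qed.

Lemma mstate_size k n bs t : 0 < k -> size (mstate k n bs t) = k.
Proof.
move=> k0; elim: t => [|t IH]; first by rewrite mstate0 size_nseq.
case: (ltnP t (size bs)) => ht.
  rewrite mstateS // mstep_size ?IH //; apply/eqP => e; by rewrite e in IH; rewrite -IH in k0.
by rewrite /mstate take_oversize ?(leq_trans ht) // -(take_oversize ht).
Qed.

Lemma mstate_min_mono k n bs t' t : 0 < k -> t' <= t ->
  minbox (mstate k n bs t) <= minbox (mstate k n bs t').
Proof.
move=> k0; elim: t => [|t IH]; first by rewrite leqn0 => /eqP->.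
rewrite leq_eqVlt => /orP[/eqP->//|]; rewrite ltnS => /IH h.
case: (ltnP t (size bs)) => ht.
  rewrite mstateS //; apply: leq_trans h; apply: mstep_min_le.
  by apply/eqP => e; have := mstate_size n bs t k0; rewrite e => e'; rewrite -e' in k0.
have -> : mstate k n bs t.+1 = mstate k n bs t by rewrite /mstate !take_oversize // (leq_trans ht).
exact: h.
Qed.

Lemma wstep_lip k g b : g <= wstep k g b + 1.
Proof. rewrite /wstep; case: eqP => [->//|_]; case: b; lia. Qed.

Lemma W_le k g bs t' t : t' <= t -> t <= size bs -> W k g bs t' <= W k g bs t + (t - t').
Proof.
move=> le; elim: t le => [|t IH]; first by rewrite leqn0 => /eqP->; rewrite addn0.
rewrite leq_eqVlt => /orP[/eqP->|]; first by rewrite subnn addn0.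
rewrite ltnS => le ht; have := IH le (ltnW ht).
rewrite WS //; have := wstep_lip k (W k g bs t) (nth true bs t); lia.
Qed.

Lemma W_mod k bs t : 0 < k -> t <= size bs -> k %| W k 0 bs t + t.
Proof.
move=> k0; elim: t => [|t IH] ht; first by rewrite W0.
rewrite WS //; have := IH (ltnW ht); rewrite /wstep.
set w := W k 0 bs t.
case: eqP => [->|hne] h.
  have -> : k.-1 + t.+1 = t + k by lia.
  by rewrite dvdn_add.
case: (nth true bs t).
  by have -> : w.-1 + t.+1 = w + t by lia.
have -> : w + k.-1 + t.+1 = (w + t) + k by lia.
by rewrite dvdn_add.
Qed.

Lemma minbox_nseq k n : 0 < k -> minbox (nseq k n) = n.
Proof.
move=> k0; apply: minbox_eq; first by rewrite mem_nseq k0 eqxx.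
by move=> x; rewrite mem_nseq => /andP[_ /eqP->].
Qed.

Lemma inv k n bs t : 0 < k -> t <= size bs ->
  (forall t', t' < t -> t' + W k 0 bs t' + k <= k * n) ->
  sumn (mstate k n bs t) + t = k * n /\
  sumn (mstate k n bs t) = k * minbox (mstate k n bs t) + W k 0 bs t.
Proof.
move=> k0; elim: t => [|t IH] ht hp.
  by rewrite mstate0 W0 sumn_nseq minbox_nseq //; split; lia.
have [h1 h2] := IH (ltnW ht) (fun t' ht' => hp t' (ltnW ht')).
have hpt := hp t (ltnSn t).
set s := mstate k n bs t.
have sz : size s = k by exact: mstate_size.
have m0 : 0 < minbox s.
  have : k <= k * minbox s.
    by move: h1 h2 hpt; set X := k * minbox s; set Y := sumn s; lia.
  by rewrite -{1}(muln1 k) leq_pmul2l.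
have [e1 e2 e3] := @mstep_inv s (nth true bs t) (W k 0 bs t) (ltac:(by rewrite sz)) m0 (ltac:(by rewrite sz; exact: h2)).
rewrite mstateS // WS // -/s; rewrite sz in e3; split; last exact: e3.
move: e2 h1; set X := sumn (mstep _ _); set Y := sumn s; set Z := k * n; lia.
Qed.

Lemma diag_iff k n bs i : 1 < k -> size bs = k * n -> 0 < i < n ->
  reaches_diag k n bs (n - i) = (W k 0 bs (k * i) == 0).
Proof.
move=> k1 sz /andP[i0 iN]; have k0 : 0 < k by exact: ltnW.
have kin : k * i + k <= k * n by rewrite -mulnSr leq_pmul2l.
have kin' : k * i <= k * n by rewrite leq_pmul2l // ltnW.
have mulB : k * (n - i) + k * i = k * n by rewrite -mulnDr subnK // ltnW.
apply/idP/idP.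
- case/hasP => t; rewrite mem_iota sz add0n ltnS => /andP[_ ht] /eqP ediag.
  have mt : minbox (mstate k n bs t) = n - i by rewrite ediag minbox_nseq.
  have P : forall t1, t1 <= t -> forall t', t' < t1 -> t' + W k 0 bs t' + k <= k * n.
    elim => [|t1 IH1] ht1 t' //; rewrite ltnS leq_eqVlt => /orP[/eqP->|ht']; last first.
      by apply: IH1 => //; exact: ltnW.
    have ht1s : t1 <= size bs by rewrite sz; apply: leq_trans ht; exact: ltnW.
    have [h1 h2] := @inv k n bs t1 k0 ht1s (IH1 (ltnW ht1)).
    have mono := mstate_min_mono n bs k0 (ltnW ht1).
    rewrite mt in mono.
    have : k <= k * minbox (mstate k n bs t1).
      by rewrite -{1}(muln1 k) leq_pmul2l //; apply: leq_trans mono; rewrite subn_gt0.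
    move: h1 h2; set S := sumn _; set X := k * minbox _; set Z := k * n; lia.
  have [h1 h2] := @inv k n bs t k0 (ltac:(by rewrite sz)) (P t (leqnn t)).
  rewrite ediag sumn_nseq minbox_nseq // in h1 h2.
  have ti : t = k * i by move: h1 mulB; rewrite mulnC; lia.
  by move: h1 h2; rewrite -ti mulnC; lia.
- move=> /eqP w0; apply/hasP; exists (k * i); first by rewrite mem_iota sz add0n ltnS.
  have P : forall t', t' < k * i -> t' + W k 0 bs t' + k <= k * n.
    move=> t' ht'; have := @W_le k 0 bs t' (k * i) (ltnW ht') (ltac:(by rewrite sz)).
    rewrite w0 add0n; lia.
  have [h1 h2] := @inv k n bs (k * i) k0 (ltac:(by rewrite sz)) P.
  rewrite w0 addn0 in h2.
  set s := mstate k n bs (k * i) in h1 h2 *.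
  have sz' : size s = k by exact: mstate_size.
  have mi : minbox s = n - i.
    apply/eqP; rewrite -(eqn_pmul2l k0); apply/eqP; move: h1 h2 mulB.
    set A := k * minbox s; set B := k * (n - i); set C := k * i; set D := k * n; set S := sumn s; lia.
  have alleq : forall x, x \in s -> x = minbox s.
    by apply: sumn_eq_all; [exact: minbox_le | rewrite sz'].
  by rewrite {1}(all_eq_nseq alleq) sz' mi.
Qed.

Lemma head_filter_iota (P : pred nat) m L :
  head (m + L) [seq i <- iota m L | P i] =
  m + \sum_(j < L) (all (fun i => ~~ P i) (iota m j.+1) : nat).
Proof.
elim: L m => [|L IH] m; first by rewrite big_ord0 addn0.
rewrite /= big_ord_recl /=; case: (P m) => /=.
  by rewrite big1 ?addn0 // => j _.
by rewrite -addSnnS IH add1n addSnnS.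
Qed.

Lemma Yval_W k n bs : 1 < k -> size bs = k * n -> 0 < n ->
  Yval k n bs = 1 + \sum_(j < n.-1) (all (fun i => W k 0 bs (k * i) != 0) (iota 1 j.+1) : nat).
Proof.
move=> k1 sz n0; rewrite /Yval.
rewrite (@eq_in_filter _ _ (fun i => W k 0 bs (k * i) == 0)); last first.
  move=> i; rewrite mem_iota => /andP[i1 iN]; apply: diag_iff => //.
  by rewrite i1 /=; move: iN; case: n n0 {sz} => //= n _; rewrite add1n ltnS.
have -> : n = 1 + n.-1 by rewrite add1n prednK.
by rewrite head_filter_iota.
Qed.

Definition alive k g (bs : seq bool) : bool := all (fun t => W k g bs t != 0) (iota 1 (size bs)).

Lemma W_take k g bs L t : t <= L -> W k g (take L bs) t = W k g bs t.
Proof. by move=> tL; rewrite /W take_takel. Qed.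

Lemma all_W_alive k bs j : 0 < k -> k * j.+1 <= size bs ->
  all (fun i => W k 0 bs (k * i) != 0) (iota 1 j.+1) = alive k 0 (take (k * j.+1) bs).
Proof.
move=> k0 hs; rewrite /alive size_takel //.
apply/allP/allP => h t; rewrite mem_iota => /andP[t1 tL].
  rewrite W_take; last by move: tL; rewrite add1n ltnS.
  apply/negP => /eqP w.
  have ts : t <= size bs by apply: leq_trans hs; move: tL; rewrite add1n ltnS.
  have := @W_mod k bs t k0 ts; rewrite w add0n => /dvdnP [i' ti'].
  have : i' \in iota 1 j.+1.
    rewrite mem_iota add1n ltnS; apply/andP; split.
      by move: t1; rewrite ti'; case: (i').
    by rewrite -(leq_pmul2l k0) mulnC -ti'; move: tL; rewrite add1n ltnS.
  by move=> /h; rewrite mulnC -ti' w.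
have := h (k * t); rewrite W_take; last by rewrite leq_pmul2l //; move: tL; rewrite add1n ltnS.
apply; rewrite mem_iota; apply/andP; split.
  by rewrite muln_gt0 k0.
by rewrite add1n ltnS leq_pmul2l //; move: tL; rewrite add1n ltnS.
Qed.

Lemma alive_cons k g b bs : alive k g (b :: bs) = (wstep k g b != 0) && alive k (wstep k g b) bs.
Proof.
rewrite /alive /=; congr (_ && _); first by rewrite /W /= take0.
have -> : iota 2 (size bs) = map (addn 1) (iota 1 (size bs)) by rewrite -iotaDl.
rewrite all_map; apply: eq_all => t /=.
by rewrite add1n.
Qed.

Lemma alive_nil k g : alive k g [::].
Proof. by []. Qed.
End NatPart.
Import NatPart.

Local Open Scope classical_set_scope.
Local Open Scope ring_scope.

Definition Sum (R : numDomainType) (p : R) (L : nat) (F : seq bool -> R) : R :=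
  \sum_(t : L.-tuple bool) pweight p t * F t.

Lemma SumS (R : numDomainType) (p : R) L F :
  Sum p L.+1 F = p * Sum p L (fun bs => F (true :: bs)) + (1 - p) * Sum p L (fun bs => F (false :: bs)).
Proof.
rewrite /Sum.
pose h (x : bool * L.-tuple bool) : L.+1.-tuple bool := [tuple of x.1 :: x.2].
pose h' (t : L.+1.-tuple bool) : bool * L.-tuple bool := (thead t, [tuple of behead t]).
have hb : bijective h.
  exists h'; first by case=> b t; rewrite /h /h' /= theadE; congr (_, _); apply: val_inj.
  by move=> t; rewrite /h /h' /= [in RHS](tuple_eta t).
rewrite (reindex h); last by apply: onW_bij.
rewrite -(pair_bigA _ (fun b t => pweight p (h (b, t)) * F (h (b, t)))) /= big_bool /=.
rewrite !mulr_sumr; congr (_ + _); apply: eq_bigr => t _;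
  by rewrite /pweight big_cons mulrA.
Qed.

Lemma Sum0 (R : numDomainType) (p : R) F : Sum p 0 F = F [::].
Proof.
rewrite /Sum (eq_bigr (fun _ => pweight p [::] * F [::])); last by move=> t _; rewrite (tuple0 t).
by rewrite sumr_const card_tuple expn0 /pweight big_nil mul1r mulr1n.
Qed.

Lemma eq_Sum (R : numDomainType) (p : R) L F G :
  (forall bs, size bs = L -> F bs = G bs) -> Sum p L F = Sum p L G.
Proof. by move=> h; apply: eq_bigr => t _; rewrite h // size_tuple. Qed.

Lemma Sum_const (R : numDomainType) (p : R) L c : Sum p L (fun _ => c) = c.
Proof.
elim: L => [|L IH]; first by rewrite Sum0.
by rewrite SumS IH -mulrDl addrC subrK mul1r.
Qed.

Lemma Sum_take (R : numDomainType) (p : R) L M F : (L <= M)%N ->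
  Sum p M (fun bs => F (take L bs)) = Sum p L F.
Proof.
elim: L M F => [|L IH] M F hLM.
  rewrite Sum0 -(Sum_const p M (F [::])); apply: eq_Sum => bs _; by rewrite take0.
case: M hLM => [//|M] hLM; rewrite !SumS /=.
by rewrite (IH M (fun bs => F (true :: bs))) // (IH M (fun bs => F (false :: bs))).
Qed.

Lemma Sum_addc (R : numDomainType) (p : R) L c F :
  Sum p L (fun bs => c + F bs) = c + Sum p L F.
Proof.
rewrite /Sum; under eq_bigr do rewrite mulrDr.
by rewrite big_split /= -/(Sum p L (fun _ => c)) Sum_const.
Qed.

Lemma Sum_sum (R : numDomainType) (p : R) L m (G : nat -> seq bool -> R) :
  Sum p L (fun bs => \sum_(0 <= j < m) G j bs) = \sum_(0 <= j < m) Sum p L (G j).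
Proof.
rewrite /Sum; under eq_bigr do rewrite mulr_sumr.
by rewrite exchange_big.
Qed.

Lemma Sum_ge0 (R : numDomainType) (p : R) L F : 0 <= p <= 1 ->
  (forall bs, 0 <= F bs) -> 0 <= Sum p L F.
Proof.
move=> /andP[p0 p1] hF; apply: sumr_ge0 => t _; apply: mulr_ge0 => //.
apply: prodr_ge0 => b _; case: b => //; by rewrite subr_ge0.
Qed.

Definition Ps (R : numDomainType) k (p : R) h L := Sum p L (fun bs => (alive k h bs)%:R).

Lemma Ps_step (R : numDomainType) k (p : R) h L : (1 < k)%N -> (0 < h)%N ->
  Ps k p h L.+1 = p * (if h == 1%N then 0 else Ps k p h.-1 L) + (1 - p) * Ps k p (h + k.-1) L.
Proof.
move=> k1 h0; rewrite /Ps SumS.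
have ht : forall bs, alive k h (true :: bs) = (h != 1%N) && alive k h.-1 bs.
  move=> bs; rewrite alive_cons /wstep; have -> : (h == 0%N) = false by lia.
  by congr (_ && _); lia.
have hf : forall bs, alive k h (false :: bs) = alive k (h + k.-1) bs.
  move=> bs; rewrite alive_cons /wstep; have -> : (h == 0%N) = false by lia.
  by have -> : (h + k.-1 != 0)%N by lia.
under eq_Sum => bs _ do rewrite ht.
under [X in _ + _ * X]eq_Sum => bs _ do rewrite hf.
case: eqP => [->|_] /=; last by [].
by rewrite Sum_const mulr0.
Qed.

Lemma Ps_zero (R : numDomainType) k (p : R) L : (1 < k)%N ->
  Ps k p 0 L.+1 = Ps k p k.-1 L.
Proof.
move=> k1; rewrite /Ps SumS.
have h : forall b bs, alive k 0 (b :: bs) = alive k k.-1 bs.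
  move=> b bs; rewrite alive_cons /wstep eqxx; by have -> : (k.-1 != 0)%N by lia.
under eq_Sum => bs _ do rewrite h.
under [X in _ + _ * X]eq_Sum => bs _ do rewrite h.
by rewrite -mulrDl addrC subrK mul1r.
Qed.

Lemma bin_ident k h v : (0 < k)%N -> (0 < h)%N ->
  (h * 'C(k * v.+1 + h, v.+1) * (k * v.+1 + h).-1 =
   (k * v.+1 + h) * (h.-1 * 'C((k * v.+1 + h).-1, v.+1) + (h + k.-1) * 'C((k * v.+1 + h).-1, v)))%N.
Proof.
move=> k0 h0; set N := (k * v.+1 + h)%N; set c := 'C(N, v.+1).
have e1 := mul_bin_down N v.+1; have e2 := mul_bin_diag N v.
rewrite mulnDr [(N * (h.-1 * _))%N]mulnCA [(N * ((h + k.-1) * _))%N]mulnCA e1 e2 -/c !mulnA -mulnDl.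
rewrite mulnAC; congr (_ * _)%N.
clear e1 e2; rewrite {}/c {}/N; case: h h0 => // h _; case: k k0 => // k _ /=.
have -> : (k.+1 * v.+1 + h.+1 - v.+1 = k * v.+1 + h.+1)%N by lia.
rewrite !(mulSn, mulnS, addSn, addnS, mulnDr, mulnDl, addnA).
lia.
Qed.

Definition psi (R : numFieldType) k (p : R) h u : R :=
  h%:R / (k * u + h)%:R * 'C(k * u + h, u)%:R * p ^+ (k.-1 * u + h) * (1 - p) ^+ u.

Lemma psi_rec (R : numFieldType) k (p : R) h u : (1 < k)%N -> (0 < h)%N ->
  psi k p h u = p * (if h == 1%N then (u == 0%N)%:R else psi k p h.-1 u) +
                (1 - p) * (if u is v.+1 then psi k p (h + k.-1) v else 0).
Proof.
move=> k1 h0; have k0 : (0 < k)%N by lia.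
have hn0 : (h%:R : R) != 0 by rewrite pnatr_eq0 -lt0n.
case: u => [|v].
  rewrite /psi !muln0 !add0n bin0 !expr0 !mulr1 mulr0 addr0 (divff hn0) mul1r.
  case: eqP => [->|hne]; first by rewrite expr1 mulr1.
  have hn1 : (h.-1%:R : R) != 0 by rewrite pnatr_eq0; lia.
  by rewrite (divff hn1) mul1r bin0 mul1r -exprS prednK.
have Hn := bin_ident v k0 h0.
set N := (k * v.+1 + h)%N in Hn *; set M := N.-1 in Hn *.
set c := 'C(N, v.+1) in Hn *; set X := 'C(M, v.+1) in Hn *; set Y := 'C(M, v) in Hn *.
have HR : (h%:R * c%:R * M%:R : R) = N%:R * ((h.-1)%:R * X%:R + (h%:R + k.-1%:R) * Y%:R).
  by rewrite -natrD -!natrM -natrD -natrM Hn.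
have N0 : (N%:R : R) != 0 by rewrite pnatr_eq0 /N; lia.
have M0 : (M%:R : R) != 0 by rewrite pnatr_eq0 /M /N; lia.
have key : h%:R / N%:R * c%:R = (h.-1)%:R / M%:R * X%:R + (h%:R + k.-1%:R) / M%:R * Y%:R :> R.
  apply/eqP; rewrite -subr_eq0.
  have -> : h%:R / N%:R * c%:R - ((h.-1)%:R / M%:R * X%:R + (h%:R + k.-1%:R) / M%:R * Y%:R) =
    (h%:R * c%:R * M%:R - N%:R * ((h.-1)%:R * X%:R + (h%:R + k.-1%:R) * Y%:R)) / (N%:R * M%:R) :> R.
    by field; rewrite N0 M0.
  by rewrite HR subrr mul0r.
rewrite /psi -/N.
have eM1 : (k * v.+1 + h.-1 = M)%N by rewrite /M /N; lia.
have eM2 : (k * v + (h + k.-1) = M)%N by rewrite /M /N; lia.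
have x1 : (k.-1 * v.+1 + h = (k.-1 * v.+1 + h.-1).+1)%N by lia.
have x2 : (k.-1 * v + (h + k.-1) = k.-1 * v.+1 + h)%N by lia.
rewrite eM1 eM2 -/X -/Y x2 x1 !exprS natrD.
have ife : (if h == 1%N then 0 else (h.-1)%:R / M%:R * X%:R * p ^+ (k.-1 * v.+1 + h.-1) * ((1 - p) * (1 - p) ^+ v))
   = (h.-1)%:R / M%:R * X%:R * p ^+ (k.-1 * v.+1 + h.-1) * ((1 - p) * (1 - p) ^+ v) :> R.
  by case: eqP => // ->; rewrite mul0r !mul0r.
rewrite ife key; ring.
Qed.

Definition Tsum (R : numFieldType) k (p : R) h L : R :=
  \sum_(0 <= u < L.+1) (if (k * u + h <= L)%N then psi k p h u else 0).

Lemma Tsum_rec (R : numFieldType) k (p : R) h L : (1 < k)%N -> (0 < h)%N ->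
  Tsum k p h L.+1 = p * (if h == 1%N then 1 else Tsum k p h.-1 L) + (1 - p) * Tsum k p (h + k.-1) L.
Proof.
move=> k1 h0; rewrite /Tsum.
under eq_bigr => u _ do rewrite (@psi_rec R k p h u k1 h0).
have sp : forall (c : bool) (A B : R), (if c then p * A + (1 - p) * B else 0) =
    p * (if c then A else 0) + (1 - p) * (if c then B else 0).
  by move=> [] A B //; rewrite !mulr0 addr0.
under eq_bigr do rewrite sp.
rewrite big_split /= -!mulr_sumr; congr (_ * _ + _ * _).
  case: eqP => [h1|hne].
    rewrite big_nat_recl // muln0 add0n h1 /= big1 ?addr0 //.
    by move=> u _; case: ifP.
  have hne' : (h == 1%N) = false by apply/eqP.
  rewrite big_nat_recr //= ifF ?addr0; last by apply/negbTE; rewrite -ltnNge; nia.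
  apply: eq_big_nat => u /andP[_ hu].
  have -> : (k * u + h <= L.+1)%N = (k * u + h.-1 <= L)%N by apply/idP/idP; lia.
  by [].
rewrite [LHS]big_nat_recl //= (_ : (if _ then 0 else 0) = 0); last by case: ifP.
rewrite add0r; apply: eq_big_nat => u _.
by have -> : (k * u.+1 + h <= L.+1)%N = (k * u + (h + k.-1) <= L)%N by apply/idP/idP; lia.
Qed.

Lemma Ps_formula (R : numFieldType) k (p : R) h L : (1 < k)%N -> (0 < h)%N ->
  Ps k p h L = 1 - Tsum k p h L.
Proof.
move=> k1; elim: L h => [|L IH] h h0.
  rewrite /Ps Sum0 /Tsum big_nat1 ifF ?subr0 //; apply/negbTE; rewrite -ltnNge; lia.
rewrite Ps_step // Tsum_rec // (IH (h + k.-1)%N); last by lia.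
case: eqP => [_|hne]; first by ring.
rewrite (IH h.-1); last by lia.
ring.
Qed.

Lemma Tsum_restrict (R : numFieldType) k (p : R) j : (1 < k)%N ->
  Tsum k p k.-1 (k * j.+1).-1 = \sum_(0 <= u < j.+1) psi k p k.-1 u.
Proof.
move=> k1; rewrite /Tsum.
have hj : (j.+1 <= (k * j.+1).-1.+1)%N.
  rewrite prednK ?muln_gt0 ?(ltnW k1) //; exact: leq_pmull (ltnW k1).
rewrite (big_cat_nat _ (n := j.+1)) //= [X in _ + X]big1_seq ?addr0.
  apply: eq_big_nat => u /andP[_ hu]; rewrite ifT //; nia.
move=> u /andP[_]; rewrite mem_index_iota => /andP[hu _]; rewrite ifF //; apply/negbTE; rewrite -ltnNge.
have : (k * j.+1 <= k * u)%N by rewrite leq_pmul2l; lia.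
lia.
Qed.

Lemma psi_scoef (R : numFieldType) k (p : R) u : (1 < k)%N -> 1 - p != 0 ->
  psi k p k.-1 u = (1 - p)^-1 * scoef k u.+1 * (p ^+ k.-1 * (1 - p)) ^+ u.+1.
Proof.
move=> k1 q0; rewrite /psi /scoef.
have e : (k * u.+1).-1 = (k * u + k.-1)%N by rewrite mulnS; lia.
rewrite e /= exprMn -exprM mulnS [(k.-1 + _)%N]addnC exprS.
field; rewrite q0 andbT -natrM -natrD pnatr_eq0; lia.
Qed.

Lemma double_sum (R : numFieldType) m (f : nat -> R) :
  \sum_(0 <= j < m) \sum_(0 <= u < j.+1) f u = \sum_(0 <= u < m) (m - u)%:R * f u.
Proof.
elim: m => [|m IH]; first by rewrite !big_geq.
rewrite big_nat_recr //= IH [in RHS]big_nat_recr //= subSnn mul1r.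
rewrite [in RHS](eq_big_nat _ _ (F2 := fun u => (m - u)%:R * f u + f u)); last first.
  by move=> u /andP[_ hu]; rewrite subSn ?(ltnW hu) // -addn1 natrD mulrDl mul1r.
by rewrite big_split /= big_nat_recr //= addrA.
Qed.

Lemma Rexp_formula (R : numFieldType) k n (p : R) : (1 < k)%N -> (0 < n)%N -> 0 <= p <= 1 -> 1 - p != 0 ->
  Rexp k n p = n%:R - (1 - p)^-1 *
    \sum_(1 <= i < n) (n - i)%:R * scoef k i * (p ^+ k.-1 * (1 - p)) ^+ i.
Proof.
move=> k1 n0 p01 q0; have k0 : (0 < k)%N by lia.
have -> : Rexp k n p = Sum p (k * n) (fun bs => (Yval k n bs)%:R) by [].
have E : forall bs, size bs = (k * n)%N -> (Yval k n bs)%:R =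
    1 + \sum_(0 <= j < n.-1) (alive k 0 (take (k * j.+1) bs))%:R :> R.
  move=> bs sz; rewrite Yval_W // natrD natr_sum big_mkord.
  congr (_ + _); apply: eq_bigr => j _.
  rewrite all_W_alive // sz leq_pmul2l //; have := ltn_ord j; lia.
under eq_Sum => bs hs do rewrite (E bs hs).
rewrite Sum_addc Sum_sum.
rewrite (eq_big_nat _ _ (F2 := fun j => 1 - \sum_(0 <= u < j.+1) psi k p k.-1 u)); last first.
  move=> j /andP[_ hj].
  rewrite (@Sum_take R p (k * j.+1) (k * n) (fun bs => (alive k 0 bs)%:R)); last by rewrite leq_pmul2l //; lia.
  rewrite -/(Ps k p 0 (k * j.+1)).
  have -> : (k * j.+1 = (k * j.+1).-1.+1)%N by rewrite prednK // muln_gt0 k0.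
  by rewrite Ps_zero // Ps_formula // ?Tsum_restrict //; lia.
rewrite sumrB double_sum big_add1 /= mulr_sumr.
rewrite sumr_const_nat subn0 addrA.
have e1 : (1 + n.-1%:R : R) = n%:R by rewrite addrC natr1 prednK.
rewrite e1; congr (_ - _); apply: eq_big_nat => u /andP[_ hu].
rewrite psi_scoef // mulrA mulrCA -!mulrA; congr (_ * _).
by have -> : (n - u.+1 = n.-1 - u)%N by lia.
Qed.

Lemma psi_sum_le1 (R : numFieldType) k (p : R) m : (1 < k)%N -> 0 <= p <= 1 ->
  \sum_(0 <= u < m) psi k p k.-1 u <= 1.
Proof.
move=> k1 p01; case: m => [|j]; first by rewrite big_geq.
rewrite -Tsum_restrict // -subr_ge0 -Ps_formula //; last by lia.
by apply: Sum_ge0 => // bs; exact: ler0n.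
Qed.

Lemma Cclosed (R : numFieldType) (z : R) M :
  (\sum_(0 <= m < M) m%:R * z ^+ m) * (1 - z) ^+ 2 = z - M%:R * z ^+ M + (M%:R - 1) * z ^+ M.+1.
Proof.
elim: M => [|M IH]; first by rewrite big_geq // mul0r expr1 mul0r sub0r mulNr mul1r subr0 addrN.
rewrite big_nat_recr //= mulrDl IH -natr1 !exprS; ring.
Qed.

Lemma cvg_bound (R : realType) (u v : R ^nat) (l : R) :
  v @ \oo --> 0 -> (forall n, `|u n - l| <= v n) -> u @ \oo --> l.
Proof.
move=> v0 h; apply: (@squeeze_cvgr _ _ _ _ (fun n => l - v n) (fun n => l + v n)).
- by apply: nearW => n; have := h n; rewrite ler_distl.
- by rewrite -[X in _ --> X]subr0; apply: cvgB => //; exact: cvg_cst.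
- by rewrite -[X in _ --> X]addr0; apply: cvgD => //; exact: cvg_cst.
Qed.

Lemma nzn_cvg (R : realType) (z : R) : `|z| < 1 -> (fun n => n%:R * z ^+ n) @ \oo --> (0 : R).
Proof.
move=> z1; set w := `|z|.
have w0 : 0 <= w by exact: normr_ge0.
have hs : cvgn (series (fun n => n%:R * w ^+ n)).
  apply: nondecreasing_is_cvgn.
    by apply: nondecreasing_series => n; rewrite mulr_ge0 // exprn_ge0.
  exists (w / (1 - w) ^+ 2) => _ [M _ <-].
  have q0 : 0 < (1 - w) ^+ 2 by rewrite exprn_gt0 // subr_gt0.
  rewrite ler_pdivlMr // /series /= Cclosed.
  have w1 : w <= 1 by exact: ltW.
  have t0 : 0 <= w ^+ M by exact: exprn_ge0.
  have M0 : 0 <= M%:R :> R by exact: ler0n.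
  rewrite exprS; set t := w ^+ M in t0 *.
  have Mt : 0 <= M%:R * t by exact: mulr_ge0.
  nra.
have := cvg_series_cvg_0 hs => h0.
apply: norm_cvg0.
have -> : (fun n => `|n%:R * z ^+ n|) = (fun n => n%:R * w ^+ n).
  by apply/funext => n; rewrite normrM normr_nat normrX.
exact: h0.
Qed.

Lemma expn_cvg (R : realType) (z : R) : `|z| < 1 -> (fun n => z ^+ n) @ \oo --> (0 : R).
Proof.
move=> h; have := @cvg_geometric R 1 z h.
have -> : geometric 1 z = (fun n => z ^+ n) by apply/funext => n; rewrite /geometric /= mul1r.
by [].
Qed.

Lemma unit_neq (R : realType) (z : R) : `|z| < 1 -> 1 - z != 0.
Proof.
move=> z1; apply/eqP => e; have ez : z = 1 by lra.
by move: z1; rewrite ez normr1 ltxx.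
Qed.

Lemma Cdiff_le (R : realType) (z : R) M : `|z| < 1 ->
  `|\sum_(0 <= m < M) m%:R * z ^+ m - z / (1 - z) ^+ 2| <=
  (`|z - 1| * (M%:R * `|z| ^+ M) + `|z| * `|z| ^+ M) / `|1 - z| ^+ 2.
Proof.
move=> z1; have q0 := unit_neq z1.
have e : \sum_(0 <= m < M) m%:R * z ^+ m - z / (1 - z) ^+ 2 =
    ((z - 1) * (M%:R * z ^+ M) - z * z ^+ M) / (1 - z) ^+ 2.
  have := Cclosed z M => h.
  have -> : \sum_(0 <= m < M) m%:R * z ^+ m = (z - M%:R * z ^+ M + (M%:R - 1) * z ^+ M.+1) / (1 - z) ^+ 2.
    by rewrite -h mulfK // expf_neq0.
  rewrite exprS; field; exact: q0.
rewrite e normrM normfV normrX; apply: ler_wpM2r.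
  by rewrite invr_ge0 exprn_ge0.
apply: le_trans (ler_normB _ _) _.
by rewrite !normrM normr_nat normrX.
Qed.

Lemma C_cvg (R : realType) (z : R) : `|z| < 1 ->
  (fun N => \sum_(0 <= m < N) m%:R * z ^+ m) @ \oo --> z / (1 - z) ^+ 2.
Proof.
move=> z1; set w := `|z|.
have w1 : `|w| < 1 by rewrite normr_id.
pose v := fun N : nat => (`|z - 1| * (N%:R * w ^+ N) + w * w ^+ N) / `|1 - z| ^+ 2.
apply: (@cvg_bound R _ v); last by move=> N; exact: Cdiff_le.
have -> : (0:R) = (`|z - 1| * 0 + w * 0) / `|1 - z| ^+ 2 by rewrite !mulr0 addr0 mul0r.
apply: cvgMr_tmp; apply: cvgD; apply: cvgMl_tmp; [exact: nzn_cvg | exact: expn_cvg].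
Qed.

Lemma swapD (R : numFieldType) (a : nat -> R) (z : R) N :
  \sum_(0 <= n < N) (\sum_(0 <= i < n) (n - i)%:R * a i) * z ^+ n =
  \sum_(0 <= i < N) a i * z ^+ i * \sum_(0 <= m < N - i) m%:R * z ^+ m.
Proof.
elim: N => [|N IH]; first by rewrite !big_geq.
rewrite big_nat_recr //= IH [in RHS]big_nat_recr //= subSnn big_nat1 mul0r mulr0 addr0.
rewrite mulr_suml -big_split /=; apply: eq_big_nat => i /andP[_ hi].
rewrite subSn ?(ltnW hi) // big_nat_recr //= mulrDr; congr (_ + _).
rewrite mulrCA -!mulrA -exprD subnKC ?(ltnW hi) //.
Qed.

Lemma GF_limit (R : realType) (a : nat -> R) (q z : R) :
  0 < q -> (forall i, 0 <= a i) -> (forall N, \sum_(0 <= i < N) a i <= q) -> `|z| < 1 ->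
  cvg ((fun N => \sum_(0 <= i < N) a i * z ^+ i) @ \oo) /\
  (fun N => \sum_(0 <= n < N) (n%:R - q^-1 * \sum_(0 <= i < n) (n - i)%:R * a i) * z ^+ n) @ \oo -->
     z / (1 - z) ^+ 2 * (1 - q^-1 * limn (fun N => \sum_(0 <= i < N) a i * z ^+ i)).
Proof.
move=> q0 age0 asum z1; set w := `|z|.
have w0 : 0 <= w by exact: normr_ge0.
have w1 : `|w| < 1 by rewrite normr_id.
have ale : forall i, a i <= q.
  move=> i; apply: le_trans (asum i.+1); rewrite big_nat_recr //= lerDr.
  by apply: sumr_ge0 => j _; exact: age0.
set B := fun N => \sum_(0 <= i < N) a i * z ^+ i.
have hB : cvg (B @ \oo).
  have -> : B = series (fun i => a i * z ^+ i) by [].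
  apply: (@normed_cvg R R^o).
  apply: (@series_le_cvg R _ (geometric q w)).
  - by move=> n; exact: normr_ge0.
  - by move=> n; rewrite /geometric /= mulr_ge0 ?exprn_ge0 // ltW.
  - move=> n; rewrite /geometric /= normrM normrX (ger0_norm (age0 n)).
    by apply: ler_wpM2r; [exact: exprn_ge0 | exact: ale].
  - exact: is_cvg_geometric_series.
split; first exact: hB.
set S := limn B; set Cinf := z / (1 - z) ^+ 2.
set C := fun M => \sum_(0 <= m < M) m%:R * z ^+ m.
set E := fun N => \sum_(0 <= n < N) (\sum_(0 <= i < n) (n - i)%:R * a i) * z ^+ n - B N * Cinf.
have eqF : (fun N => \sum_(0 <= n < N) (n%:R - q^-1 * \sum_(0 <= i < n) (n - i)%:R * a i) * z ^+ n)
    = (fun N => C N - q^-1 * (B N * Cinf + E N)).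
  apply/funext => N; rewrite /E /= (addrC (B N * Cinf)) subrK /C /=.
  under eq_bigr do rewrite mulrBl -mulrA.
  by rewrite sumrB -mulr_sumr.
have K0 : 0 <= `|1 - z| ^+ 2 :> R by exact: exprn_ge0.
have hE : E @ \oo --> 0.
  pose v := fun N : nat => q * ((2 * (N%:R * w ^+ N) + w ^+ N) / `|1 - z| ^+ 2).
  apply: (@cvg_bound R E v).
    have -> : (0:R) = q * ((2 * 0 + 0) / `|1 - z| ^+ 2) by rewrite mulr0 addr0 mul0r mulr0.
    apply: cvgMl_tmp; apply: cvgMr_tmp; apply: cvgD; [apply: cvgMl_tmp; exact: nzn_cvg | exact: expn_cvg].
  move=> N; rewrite subr0 /E swapD.
  have -> : \sum_(0 <= i < N) a i * z ^+ i * C (N - i)%N - B N * Cinf =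
      \sum_(0 <= i < N) a i * z ^+ i * (C (N - i)%N - Cinf).
    by rewrite /B mulr_suml -sumrB; apply: eq_bigr => i _; rewrite mulrBr.
  apply: le_trans (ler_norm_sum _ _ _) _.
  apply: (@le_trans _ _ (\sum_(0 <= i < N) a i * ((2 * (N%:R * w ^+ N) + w ^+ N) / `|1 - z| ^+ 2))).
    apply: ler_sum_nat => i /andP[_ hi].
    rewrite normrM normrM normrX (ger0_norm (age0 i)) -mulrA; apply: ler_wpM2l; first exact: age0.
    apply: (@le_trans _ _ (w ^+ i * ((`|z - 1| * ((N - i)%:R * w ^+ (N - i)) + w * w ^+ (N - i)) / `|1 - z| ^+ 2))).
      by apply: ler_wpM2l; [exact: exprn_ge0 | exact: Cdiff_le].
    rewrite mulrA; apply: ler_wpM2r; first by rewrite invr_ge0.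
    have eN : w ^+ i * w ^+ (N - i) = w ^+ N by rewrite -exprD subnKC // ltnW.
    have -> : w ^+ i * (`|z - 1| * ((N - i)%:R * w ^+ (N - i)) + w * w ^+ (N - i)) =
        `|z - 1| * ((N - i)%:R * w ^+ N) + w * w ^+ N.
      by rewrite -eN; ring.
    have t0 : 0 <= w ^+ N by exact: exprn_ge0.
    have c2 : `|z - 1| <= 2 by apply: le_trans (ler_normB _ _) _; rewrite normr1; lra.
    have Mt : 0 <= (N - i)%:R * w ^+ N by rewrite mulr_ge0.
    have h1 : `|z - 1| * ((N - i)%:R * w ^+ N) <= 2 * ((N - i)%:R * w ^+ N) by exact: ler_wpM2r.
    have h2 : (N - i)%:R * w ^+ N <= N%:R * w ^+ N by apply: ler_wpM2r => //; rewrite ler_nat leq_subr.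
    have h3 : w * w ^+ N <= w ^+ N by rewrite ler_piMl //; move: w1; rewrite normr_id => /ltW.
    lra.
  rewrite -mulr_suml; apply: ler_wpM2r; last exact: asum.
  by rewrite divr_ge0 // addr_ge0 ?exprn_ge0 // mulr_ge0 // mulr_ge0 // exprn_ge0.
rewrite eqF.
have -> : Cinf * (1 - q^-1 * S) = Cinf - q^-1 * (S * Cinf + 0) by ring.
apply: cvgB; first exact: C_cvg.
apply: cvgMl_tmp; apply: cvgD => //; apply: cvgMr_tmp; exact: hB.
Qed.

Lemma sum01 (R : zmodType) (f : nat -> R) N : f 0%N = 0 ->
  \sum_(1 <= i < N) f i = \sum_(0 <= i < N) f i.
Proof. by move=> f0; case: N => [|N]; [rewrite !big_geq | rewrite [RHS]big_ltn // f0 add0r]. Qed.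

Unset Implicit Arguments.

Theorem theorem5p1 (R : realType) (k : nat) (p : R) :
  (2 <= k)%N -> 0 < p < 1 ->
  [/\ Rexp k 1 p = 1,
      (forall n : nat, (2 <= n)%N ->
         Rexp k n p = n%:R - (1 - p)^-1 *
           \sum_(1 <= i < n) (n - i)%:R * scoef k i * (p ^+ k.-1 * (1 - p)) ^+ i)
    & (forall z : R, `|z| < 1 ->
         cvg ((fun N => \sum_(1 <= i < N) scoef k i * (p ^+ k.-1 * (1 - p) * z) ^+ i) @ \oo)
         /\ ((fun N => \sum_(1 <= n < N) Rexp k n p * z ^+ n) @ \oo -->
            z / (1 - z) ^+ 2 *
              (1 - (1 - p)^-1 * limn (fun N => \sum_(1 <= i < N) scoef k i * (p ^+ k.-1 * (1 - p) * z) ^+ i))))].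
Proof.
move=> k1 /andP[p0 p1].
have p01 : 0 <= p <= 1 by rewrite !ltW.
have q0 : 0 < 1 - p by rewrite subr_gt0.
have qn0 : 1 - p != 0 by rewrite gt_eqF.
split.
- by rewrite Rexp_formula // big_geq // mulr0 subr0.
- by move=> n n2; rewrite Rexp_formula //; lia.
move=> z z1.
pose x := p ^+ k.-1 * (1 - p).
pose a := fun i => scoef k i * x ^+ i.
have x0 : 0 <= x by rewrite mulr_ge0 ?exprn_ge0 // ltW.
have a0 : a 0%N = 0 by rewrite /a /scoef muln0 /= invr0 mulr0 !mul0r.
have age0 : forall i, 0 <= a i.
  move=> i; apply: mulr_ge0; last exact: exprn_ge0.
  by rewrite /scoef; apply: mulr_ge0; [apply: divr_ge0|]; exact: ler0n.
have asum : forall N, \sum_(0 <= i < N) a i <= 1 - p.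
  case=> [|N]; first by rewrite big_geq // ltW.
  rewrite big_nat_recl // a0 add0r.
  have -> : \sum_(0 <= i < N) a i.+1 = (1 - p) * \sum_(0 <= i < N) psi k p k.-1 i.
    rewrite mulr_sumr; apply: eq_bigr => i _; by rewrite psi_scoef // !mulrA divff // mul1r.
  apply: (@le_trans _ _ ((1 - p) * 1)); last by rewrite mulr1.
  by apply: ler_wpM2l; [exact: ltW | exact: psi_sum_le1].
have [hc hl] := GF_limit q0 age0 asum z1.
have e1 : (fun N => \sum_(1 <= i < N) scoef k i * (p ^+ k.-1 * (1 - p) * z) ^+ i) =
    (fun N => \sum_(0 <= i < N) a i * z ^+ i).
  apply/funext => N; rewrite sum01; last by move: a0; rewrite /a !expr0 !mulr1.
  by apply: eq_bigr => i _; rewrite exprMn mulrA.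
have e2 : (fun N => \sum_(1 <= n < N) Rexp k n p * z ^+ n) =
    (fun N => \sum_(0 <= n < N) (n%:R - (1 - p)^-1 * \sum_(0 <= i < n) (n - i)%:R * a i) * z ^+ n).
  apply/funext => N; rewrite -sum01; last by rewrite big_geq // mulr0 subr0 mul0r.
  apply: eq_big_nat => n /andP[n1 _]; rewrite Rexp_formula //; congr ((_ - _ * _) * _).
  rewrite sum01; last by move: a0; rewrite /a => a0'; rewrite -mulrA a0' mulr0.
  by apply: eq_bigr => i _; rewrite -mulrA.
by rewrite e1 e2.
Qed.
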